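(* Let $\mathbf{X}\in\mathbb{R}_+^{L\times N}$, $\lambda\ge0$, $\xi>0$, $\mathbf{H}=\mathbf{1}_K\mathbf{h}^T$ with $\mathbf{h}\in[0,\tfrac12]^N$, and $$\mathcal{O}_\xi(\mathbf{M},\mathbf{A})=\tfrac12\|\mathbf{X}-\mathbf{M}\mathbf{A}\|_{2,1}+\lambda\big\|(\mathbf{A}+\xi)^{\mathbf{1}-\mathbf{H}}\big\|_1 .$$ Let $\mathbf{M}\in\mathbb{R}_+^{L\times K}$, $\mathbf{A}\in\mathbb{R}_+^{K\times N}$ be such that every row of $\mathbf{M}\mathbf{A}-\mathbf{X}$ is nonzero, and let $\mathbf{U}$ be diagonal with $U_{ll}=\tfrac12\|(\mathbf{M}\mathbf{A}-\mathbf{X})^l\|_2^{-1}$. Holding $\mathbf{U}$ fixed, compute $\bar{\mathbf{A}}$ by $$\bar A_{kn}=A_{kn}\frac{(\mathbf{M}^T\mathbf{U}\mathbf{X})_{kn}}{\big(\mathbf{M}^T\mathbf{U}\mathbf{M}\mathbf{A}+\lambda(\mathbf{1}-\mathbf{H})\circ(\mathbf{A}+\xi)^{-\mathbf{H}}\big)_{kn}}$$ and then $\bar{\mathbf{M}}$ by $$\bar M_{lk}=M_{lk}\frac{(\mathbf{U}\mathbf{X}\bar{\mathbf{A}}^T)_{lk}}{(\mathbf{U}\mathbf{M}\bar{\mathbf{A}}\bar{\mathbf{A}}^T)_{lk}}$$ (all denominators assumed positive). Then $\mathcal{O}_\xi(\bar{\mathbf{M}},\bar{\mathbf{A}})\le\mathcal{O}_\xi(\mathbf{M},\mathbf{A})$;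 i.e., the objective is non-increasing under these updating rules.
   Context: For a matrix $\mathbf{Y}$, $\mathbf{y}^l$ denotes its $l$-th row and $\|\mathbf{Y}\|_{2,1}=\sum_l\|\mathbf{y}^l\|_2$. $\|\mathbf{B}\|_1=\sum_{k,n}|B_{kn}|$. $(\mathbf{A}+\xi)^{\mathbf{1}-\mathbf{H}}=[(A_{kn}+\xi)^{1-H_{kn}}]$ and $(\mathbf{A}+\xi)^{-\mathbf{H}}=[(A_{kn}+\xi)^{-H_{kn}}]$ are entrywise powers, $\circ$ is the Hadamard product, $\mathbf{1}$ is the all-ones $K\times N$ matrix and $\mathbf{1}_K$ the all-ones vector of length $K$. $\mathbf{H}$ (the ''guidance map'' replicated over $K$ rows) is held fixed during the update. *)

(* Defs.v *)
From Stdlib Require Import Reals Lra Lia Arith.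
Open Scope R_scope.

(* A matrix is represented by its entry function; dimensions are carried
   explicitly and only entries with indices in range are ever read. *)
Definition mat := nat -> nat -> R.

Fixpoint rsum (n : nat) (f : nat -> R) : R :=
  match n with
  | O => 0
  | S m => rsum m f + f m
  end.

Definition matmul (p : nat) (A B : mat) : mat :=
  fun i j => rsum p (fun k => A i k * B k j).

Definition tr (A : mat) : mat := fun i j => A j i.

Definition madd (A B : mat) : mat := fun i j => A i j + B i j.
Definition msub (A B : mat) : mat := fun i j => A i j - B i j.

Definition diagm (u : nat -> R) : mat :=
  fun i j => if Nat.eqb i j then u i else 0.

Definition rownorm (N : nat) (Y : mat) (l : nat) : R :=
  sqrt (rsum N (fun n => Y l n ^ 2)).

Definition norm21 (L N : nat) (Y : mat) : R := rsum L (fun l => rownorm N Y l).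

Definition norm1 (K N : nat) (B : mat) : R := rsum K (fun k => rsum N (fun n => Rabs (B k n))).

Definition Hmap (h : nat -> R) : mat := fun _ n => h n.

Definition objective (L K N : nat) (X : mat) (lam xi : R) (h : nat -> R)
    (M A : mat) : R :=
  / 2 * norm21 L N (msub X (matmul K M A))
  + lam * norm1 K N (fun k n => Rpower (A k n + xi) (1 - Hmap h k n)).

Definition Udiag (K N : nat) (X M A : mat) : nat -> R :=
  fun l => / 2 * / rownorm N (msub (matmul K M A) X) l.

Definition updA (L K N : nat) (X : mat) (lam xi : R) (h : nat -> R)
    (U : nat -> R) (M A : mat) : mat :=
  fun k n =>
    A k n * matmul L (matmul L (tr M) (diagm U)) X k n
    / (matmul L (matmul L (tr M) (diagm U)) (matmul K M A) k n
       + lam * ((1 - Hmap h k n) * Rpower (A k n + xi) (- Hmap h k n))).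

Definition updM (L K N : nat) (X : mat) (U : nat -> R) (M Ab : mat) : mat :=
  fun l k =>
    M l k * matmul N (matmul L (diagm U) X) (tr Ab) l k
    / matmul N (matmul K (matmul L (diagm U) M) Ab) (tr Ab) l k.

(* Main.v *)
Require Import Defs.
From Stdlib Require Import Reals Lra Lia Arith Psatz.
Open Scope R_scope.

Lemma rsum_ext n f g : (forall i, (i < n)%nat -> f i = g i) -> rsum n f = rsum n g.
Proof. induction n; simpl; intros H; [reflexivity|]. rewrite IHn by (intros; apply H; lia). rewrite (H n) by lia. reflexivity. Qed.

Lemma rsum_plus n f g : rsum n (fun i => f i + g i) = rsum n f + rsum n g.
Proof. induction n; simpl; [ring|]. rewrite IHn; ring. Qed.

Lemma rsum_scal n c f : rsum n (fun i => c * f i) = c * rsum n f.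
Proof. induction n; simpl; [ring|]. rewrite IHn; ring. Qed.

Lemma rsum_minus n f g : rsum n (fun i => f i - g i) = rsum n f - rsum n g.
Proof. induction n; simpl; [ring|]. rewrite IHn; ring. Qed.

Lemma rsum_zero n : rsum n (fun _ => 0) = 0.
Proof. induction n; simpl; [auto|rewrite IHn; ring]. Qed.

Lemma rsum_le n f g : (forall i, (i<n)%nat -> f i <= g i) -> rsum n f <= rsum n g.
Proof. induction n; simpl; intros H; [lra|].
 assert (H1 := H n ltac:(lia)). assert (rsum n f <= rsum n g) by (apply IHn; intros; apply H; lia). lra. Qed.

Lemma rsum_nonneg n f : (forall i, (i<n)%nat -> 0 <= f i) -> 0 <= rsum n f.
Proof. intros H. rewrite <- (rsum_zero n). apply rsum_le; auto. Qed.

Lemma rsum_pos n f : (forall i, (i<n)%nat -> 0 <= f i) -> (exists i, (i<n)%nat /\ 0 < f i) -> 0 < rsum n f.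
Proof. induction n; intros H [i [Hi Hf]]; [lia|]. simpl. destruct (Nat.eq_dec i n).
 - subst. assert (0 <= rsum n f) by (apply rsum_nonneg; intros; apply H; lia). lra.
 - assert (0 < rsum n f) by (apply IHn; [intros; apply H; lia| exists i; split; [lia|auto]]).
   assert (0 <= f n) by (apply H; lia). lra. Qed.

Lemma rsum_swap n m (f : nat -> nat -> R) :
  rsum n (fun i => rsum m (fun j => f i j)) = rsum m (fun j => rsum n (fun i => f i j)).
Proof. induction n; simpl. rewrite rsum_zero; auto. rewrite IHn. rewrite <- rsum_plus. reflexivity. Qed.

Lemma rsum_delta n l (g : nat -> R) : (l < n)%nat ->
  rsum n (fun j => if Nat.eqb l j then g j else 0) = g l.
Proof. induction n; intros Hl; [lia|]. simpl. destruct (Nat.eq_dec l n).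
 - subst. rewrite Nat.eqb_refl. replace (rsum n _) with (rsum n (fun _ => 0)). rewrite rsum_zero. ring.
   apply rsum_ext. intros i Hi. destruct (Nat.eqb_spec n i); [lia|auto].
 - rewrite IHn by lia. destruct (Nat.eqb_spec l n); [lia|ring]. Qed.

Lemma diag_l L U l Y : (l<L)%nat -> rsum L (fun j => diagm U l j * Y j) = U l * Y l.
Proof. intros. rewrite <- (rsum_delta L l (fun j => U l * Y j)) by auto. apply rsum_ext; intros.
 unfold diagm. destruct (Nat.eqb l i); ring. Qed.

Lemma diag_r L U l Y : (l<L)%nat -> rsum L (fun j => Y j * diagm U j l) = Y l * U l.
Proof. intros. rewrite <- (rsum_delta L l (fun j => Y j * U l)) by auto. apply rsum_ext; intros.
 unfold diagm. destruct (Nat.eqb_spec i l), (Nat.eqb_spec l i); subst; try lia; ring. Qed.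

Lemma cs n p s : (forall i, (i<n)%nat -> 0 <= p i) ->
  (rsum n (fun i => p i * s i))^2 <= rsum n p * rsum n (fun i => p i * s i ^2).
Proof. induction n; intros H; cbn [rsum]; [lra|].
 assert (IH := IHn (fun i Hi => H i ltac:(lia))).
 assert (Hp: 0 <= p n) by (apply H; lia).
 assert (HP: 0 <= rsum n p) by (apply rsum_nonneg; intros; apply H; lia).
 assert (HQ: 0 <= rsum n (fun i => p i * s i ^2)) by (apply rsum_nonneg; intros; apply Rmult_le_pos; [apply H; lia| nra]).
 set (S := rsum n (fun i => p i * s i)) in *. set (P := rsum n p) in *. set (Q := rsum n (fun i => p i * s i ^2)) in *.
 assert (K: 2 * s n * S <= P * s n ^2 + Q).
 { destruct (Req_dec P 0) as [E|E].
   - assert (S = 0) by (rewrite E in IH; nra). rewrite H0, E. nra.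
   - assert (0 < P) by lra. assert (0 <= (P * s n - S)^2) by apply pow2_ge_0.
     assert (0 <= P * (P * s n ^2 + Q - 2 * s n * S)).
     { replace (P * (P * s n ^2 + Q - 2 * s n * S)) with ((P * s n - S)^2 + (P*Q - S^2)) by ring. lra. }
     destruct (Rle_or_lt 0 (P * s n ^2 + Q - 2 * s n * S)) as [?|Hn]; [lra|].
     assert (P * (P * s n ^2 + Q - 2 * s n * S) < 0) by (apply Rmult_pos_neg; auto). lra. }
 assert (0 <= p n * (P * s n ^2 + Q - 2 * s n * S)) by (apply Rmult_le_pos; lra).
 match goal with |- ?a <= ?b => replace b with (a + (P*Q - S^2) + p n * (P * s n ^2 + Q - 2 * s n * S)) by ring end.
 lra. Qed.

Lemma ln_le_sub1 x : 0 < x -> ln x <= x - 1.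
Proof. intros. pose proof (exp_ineq1_le (ln x)). rewrite exp_ln in H0 by auto. lra. Qed.

Lemma exp_le_mono a b : a <= b -> exp a <= exp b.
Proof. intros [H|H]. left; apply exp_increasing; auto. subst; lra. Qed.

Lemma pow_tangent1 p t : 0 <= p <= 1 -> 0 < t -> Rpower t p <= 1 + p*(t-1).
Proof. intros Hp Ht. set (m := p * t + (1 - p)).
 assert (Hm : 0 < m). { unfold m. destruct (Req_dec p 0). subst; lra. nra. }
 assert (H1 := ln_le_sub1 (t / m) ltac:(apply Rdiv_lt_0_compat; auto)).
 assert (H2 := ln_le_sub1 (/ m) ltac:(apply Rinv_0_lt_compat; auto)).
 unfold Rdiv in H1. rewrite ln_mult in H1 by (auto; apply Rinv_0_lt_compat; auto).
 rewrite ln_Rinv in H1, H2 by auto.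
 assert (E: p * (t * / m - 1) + (1 - p) * (/ m - 1) = 0).
 { unfold m in *. field. lra. }
 assert (p * ln t <= ln m).
 { assert (p * (ln t + - ln m) <= p * (t * / m - 1)) by (apply Rmult_le_compat_l; lra).
   assert ((1-p) * (- ln m) <= (1-p) * (/ m - 1)) by (apply Rmult_le_compat_l; lra). nra. }
 unfold Rpower. replace (1 + p * (t-1)) with m by (unfold m; ring).
 rewrite <- (exp_ln m) by auto. apply exp_le_mono. lra. Qed.

Lemma pow_tangent p x y : 0 <= p <= 1 -> 0 < x -> 0 < y ->
  Rpower y p <= Rpower x p + p * Rpower x (p - 1) * (y - x).
Proof. intros Hp Hx Hy.
 assert (E1 : Rpower y p = Rpower x p * Rpower (y / x) p).
 { unfold Rpower, Rdiv. rewrite ln_mult by (auto; apply Rinv_0_lt_compat; auto).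
   rewrite ln_Rinv by auto. rewrite <- exp_plus. f_equal. ring. }
 assert (E2 : Rpower x (p - 1) = Rpower x p / x).
 { unfold Rpower, Rdiv. rewrite <- (exp_ln x) at 3 by auto. rewrite <- exp_Ropp, <- exp_plus. f_equal. ring. }
 assert (T := pow_tangent1 p (y / x) Hp ltac:(apply Rdiv_lt_0_compat; auto)).
 assert (Px : 0 < Rpower x p) by (unfold Rpower; apply exp_pos).
 rewrite E1, E2. replace (Rpower x p + p * (Rpower x p / x) * (y - x)) with (Rpower x p * (1 + p * (y / x - 1))) by (field; lra).
 apply Rmult_le_compat_l; lra. Qed.

Lemma LS (P K : nat) (w y c a0 a : nat -> R) (G : nat -> nat -> R) :
 (forall l, (l<P)%nat -> 0 <= w l) ->
 (forall l k, (l<P)%nat -> (k<K)%nat -> 0 <= G l k) ->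
 (forall k, (k<K)%nat -> 0 <= a0 k) ->
 (forall k, (k<K)%nat -> 0 <= c k) ->
 (forall k, (k<K)%nat -> 0 < rsum P (fun l => w l * G l k * rsum K (fun j => G l j * a0 j)) + c k) ->
 (forall k, (k<K)%nat -> a k = a0 k * rsum P (fun l => w l * G l k * y l) /
     (rsum P (fun l => w l * G l k * rsum K (fun j => G l j * a0 j)) + c k)) ->
 rsum P (fun l => w l * (y l - rsum K (fun k => G l k * a k))^2) / 2 + rsum K (fun k => c k * (a k - a0 k))
 <= rsum P (fun l => w l * (y l - rsum K (fun k => G l k * a0 k))^2) / 2.
Proof.
 intros Hw HG Ha0 Hc HD Ha.
 pose (E0 l := rsum K (fun j => G l j * a0 j)).
 pose (D k := rsum P (fun l => w l * G l k * E0 l) + c k).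
 pose (B k := rsum P (fun l => w l * G l k * y l)).
 pose (v k := a k - a0 k).
 pose (t l := rsum K (fun k => G l k * v k)).
 pose (s k := (B k - D k) / D k).
 assert (HD' : forall k, (k<K)%nat -> 0 < D k) by exact HD.
 assert (Ha' : forall k, (k<K)%nat -> a k = a0 k * B k / D k) by exact Ha.
 assert (F1 : forall l, y l - rsum K (fun k => G l k * a k) = (y l - E0 l) - t l).
 { intros l. unfold t, E0, v. assert (rsum K (fun k => G l k * (a k - a0 k)) = rsum K (fun k => G l k * a k) - rsum K (fun j => G l j * a0 j)).
   { rewrite <- rsum_minus. apply rsum_ext; intros; ring. } lra. }
 assert (F2 : forall k, (k<K)%nat -> v k = a0 k * s k).
 { intros k Hk. unfold v, s. rewrite Ha' by auto. specialize (HD' k Hk). field. lra. }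
 assert (F3 : forall k, (k<K)%nat -> v k * (D k - B k) = - (a0 k * D k * s k ^ 2)).
 { intros k Hk. rewrite F2 by auto. unfold s. specialize (HD' k Hk). field. lra. }
 assert (X1 : rsum P (fun l => w l * (y l - rsum K (fun k => G l k * a k))^2) =
   rsum P (fun l => w l * (y l - E0 l)^2) - 2 * rsum P (fun l => w l * (y l - E0 l) * t l)
   + rsum P (fun l => w l * t l ^2)).
 { rewrite <- rsum_scal, <- rsum_minus, <- rsum_plus. apply rsum_ext; intros. rewrite F1. ring. }
 assert (X2 : rsum P (fun l => w l * (y l - E0 l) * t l) = rsum K (fun k => v k * (B k - D k + c k))).
 { unfold t. transitivity (rsum P (fun l => rsum K (fun k => w l * (y l - E0 l) * (G l k * v k)))).
   { apply rsum_ext; intros. rewrite <- rsum_scal. reflexivity. }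
   rewrite rsum_swap. apply rsum_ext; intros k Hk. unfold D, B.
   transitivity (v k * (rsum P (fun l => w l * G l k * y l) - rsum P (fun l => w l * G l k * E0 l))).
   { rewrite <- rsum_minus, <- rsum_scal. apply rsum_ext; intros. ring. }
   ring. }
 assert (X3 : rsum P (fun l => w l * t l ^ 2) <= rsum K (fun k => a0 k * s k ^ 2 * (D k - c k))).
 { transitivity (rsum P (fun l => w l * (E0 l * rsum K (fun k => G l k * a0 k * s k ^ 2)))).
   { apply rsum_le; intros l Hl. apply Rmult_le_compat_l; auto.
     replace (t l) with (rsum K (fun k => (G l k * a0 k) * s k)).
     replace (E0 l) with (rsum K (fun k => G l k * a0 k)) by reflexivity.
     replace (rsum K (fun k => G l k * a0 k * s k ^ 2)) with (rsum K (fun k => (G l k * a0 k) * s k ^ 2)) by reflexivity.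
     apply cs. intros; apply Rmult_le_pos; auto.
     unfold t. apply rsum_ext; intros. rewrite F2 by auto. ring. }
   right. transitivity (rsum P (fun l => rsum K (fun k => w l * E0 l * (G l k * a0 k * s k ^ 2)))).
   { apply rsum_ext; intros. rewrite <- 2!rsum_scal. apply rsum_ext; intros. ring. }
   rewrite rsum_swap. apply rsum_ext; intros k Hk. unfold D.
   replace (rsum P (fun l => w l * G l k * E0 l) + c k - c k) with (rsum P (fun l => w l * G l k * E0 l)) by ring.
   rewrite <- rsum_scal. apply rsum_ext; intros. ring. }
 assert (X4 : rsum K (fun k => a0 k * s k ^ 2 * (D k - c k)) = rsum K (fun k => a0 k * D k * s k ^ 2) - rsum K (fun k => a0 k * s k ^ 2 * c k)).
 { rewrite <- rsum_minus. apply rsum_ext; intros; ring. }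
 assert (X5 : 0 <= rsum K (fun k => a0 k * s k ^ 2 * c k)).
 { apply rsum_nonneg; intros. apply Rmult_le_pos; auto. apply Rmult_le_pos; auto. apply pow2_ge_0. }
 assert (X6 : 0 <= rsum K (fun k => a0 k * D k * s k ^ 2)).
 { apply rsum_nonneg; intros. apply Rmult_le_pos; [|apply pow2_ge_0]. apply Rmult_le_pos; auto. left; auto. }
 assert (X7 : rsum K (fun k => v k * (B k - D k + c k)) = rsum K (fun k => c k * (a k - a0 k)) + rsum K (fun k => a0 k * D k * s k ^ 2)).
 { rewrite <- rsum_plus. apply rsum_ext; intros k Hk. pose proof (F3 k Hk). unfold v in *. lra. }
 change (rsum P (fun l => w l * (y l - rsum K (fun k => G l k * a0 k))^2)) with (rsum P (fun l => w l * (y l - E0 l)^2)).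
 rewrite X1, X2. lra.
Qed.

Lemma mmUl L M U (Y : mat) k n : matmul L (matmul L (tr M) (diagm U)) Y k n = rsum L (fun l => U l * M l k * Y l n).
Proof. unfold matmul at 1. apply rsum_ext; intros l Hl. unfold matmul.
 assert (E := diag_r L U l (fun j => M j k) Hl). simpl in E. unfold tr. rewrite E. ring. Qed.

Lemma mmUX L N U X (Ab : mat) l k : (l < L)%nat ->
  matmul N (matmul L (diagm U) X) (tr Ab) l k = rsum N (fun n => U l * Ab k n * X l n).
Proof. intros Hl. unfold matmul at 1. apply rsum_ext; intros n Hn. unfold matmul.
 assert (E := diag_l L U l (fun j => X j n) Hl). simpl in E. rewrite E. unfold tr. ring. Qed.

Lemma mmUM L K N U M (Ab : mat) l k : (l < L)%nat ->
  matmul N (matmul K (matmul L (diagm U) M) Ab) (tr Ab) l k =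
  rsum N (fun n => U l * Ab k n * rsum K (fun j => Ab j n * M l j)).
Proof. intros Hl. unfold matmul at 1. apply rsum_ext; intros n Hn. unfold matmul at 1.
 unfold tr.
 transitivity (rsum K (fun j => U l * (Ab j n * M l j)) * Ab k n); [|rewrite rsum_scal; ring].
 f_equal. apply rsum_ext; intros j Hj. unfold matmul.
 assert (E := diag_l L U l (fun i => M i j) Hl). simpl in E. rewrite E. ring. Qed.

Lemma rsum_div2 n f : rsum n (fun i => f i / 2) = rsum n f / 2.
Proof. unfold Rdiv. rewrite Rmult_comm, <- rsum_scal. apply rsum_ext; intros; ring. Qed.

Lemma Rpower_pos x y : 0 < Rpower x y.
Proof. unfold Rpower; apply exp_pos. Qed.

Definition Gq (L K N : nat) (X : mat) (U : nat -> R) (M A : mat) :=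
  rsum L (fun l => rsum N (fun n => U l * (X l n - rsum K (fun k => M l k * A k n))^2)).

Theorem theorem2 (L K N : nat) (X M A : mat) (lam xi : R) (h : nat -> R) :
  (forall l n, (l < L)%nat -> (n < N)%nat -> 0 <= X l n) ->
  0 <= lam ->
  0 < xi ->
  (forall n, (n < N)%nat -> 0 <= h n <= / 2) ->
  (forall l k, (l < L)%nat -> (k < K)%nat -> 0 <= M l k) ->
  (forall k n, (k < K)%nat -> (n < N)%nat -> 0 <= A k n) ->
  (* every row of M A - X is nonzero *)
  (forall l, (l < L)%nat ->
     exists n, (n < N)%nat /\ msub (matmul K M A) X l n <> 0) ->
  let U := Udiag K N X M A in
  let Ab := updA L K N X lam xi h U M A in
  let Mb := updM L K N X U M Ab in
  (* all denominators positive *)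
  (forall k n, (k < K)%nat -> (n < N)%nat ->
     0 < matmul L (matmul L (tr M) (diagm U)) (matmul K M A) k n
         + lam * ((1 - Hmap h k n) * Rpower (A k n + xi) (- Hmap h k n))) ->
  (forall l k, (l < L)%nat -> (k < K)%nat ->
     0 < matmul N (matmul K (matmul L (diagm U) M) Ab) (tr Ab) l k) ->
  objective L K N X lam xi h Mb Ab <= objective L K N X lam xi h M A.
Proof.
 intros HX Hlam Hxi Hh HM HA Hrow U Ab Mb HdenA HdenM.
 pose (s0 l := rownorm N (msub (matmul K M A) X) l).
 pose (q (M' A' : mat) l := rsum N (fun n => (X l n - rsum K (fun k => M' l k * A' k n))^2)).
 assert (Hs0 : forall l, (l < L)%nat -> 0 < s0 l).
 { intros l Hl. unfold s0, rownorm. apply sqrt_lt_R0. apply rsum_pos.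
   - intros; apply pow2_ge_0.
   - destruct (Hrow l Hl) as [n [Hn Hne]]. exists n. split; auto.
     destruct (Rlt_or_le 0 (msub (matmul K M A) X l n)); nra. }
 assert (Hsq : forall l, (l < L)%nat -> s0 l ^ 2 = q M A l).
 { intros l Hl. unfold s0, rownorm. rewrite pow2_sqrt by (apply rsum_nonneg; intros; apply pow2_ge_0).
   unfold q. apply rsum_ext; intros. unfold msub, matmul. ring. }
 assert (HUe : forall l, U l = / 2 * / s0 l) by reflexivity.
 assert (HU : forall l, (l < L)%nat -> 0 < U l).
 { intros l Hl. rewrite HUe. specialize (Hs0 l Hl). apply Rmult_lt_0_compat; [lra|]. apply Rinv_0_lt_compat; auto. }
 pose (cA k n := lam * ((1 - h n) * Rpower (A k n + xi) (- h n))).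
 assert (HcA : forall k n, (n < N)%nat -> 0 <= cA k n).
 { intros k n Hn. unfold cA. apply Rmult_le_pos; auto. apply Rmult_le_pos. specialize (Hh n Hn); lra. left; apply Rpower_pos. }
 assert (HAbe : forall k n, (k < K)%nat -> (n < N)%nat -> Ab k n = A k n * rsum L (fun l => U l * M l k * X l n) /
     (rsum L (fun l => U l * M l k * rsum K (fun j => M l j * A j n)) + cA k n)).
 { intros k n Hk Hn. unfold Ab, updA. rewrite 2!mmUl. unfold Hmap. reflexivity. }
 assert (HDA : forall k n, (k < K)%nat -> (n < N)%nat ->
     0 < rsum L (fun l => U l * M l k * rsum K (fun j => M l j * A j n)) + cA k n).
 { intros k n Hk Hn. specialize (HdenA k n Hk Hn). rewrite mmUl in HdenA. unfold Hmap in HdenA. exact HdenA. }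
 assert (HAb : forall k n, (k < K)%nat -> (n < N)%nat -> 0 <= Ab k n).
 { intros k n Hk Hn. rewrite HAbe by auto. unfold Rdiv. apply Rmult_le_pos.
   apply Rmult_le_pos; auto. apply rsum_nonneg; intros l Hl. apply Rmult_le_pos; [apply Rmult_le_pos|]; auto. left; auto.
   left. apply Rinv_0_lt_compat; auto. }
 pose (Lin := rsum K (fun k => rsum N (fun n => (1 - h n) * Rpower (A k n + xi) (- h n) * (Ab k n - A k n)))).
 assert (SA : Gq L K N X U M Ab / 2 + lam * Lin <= Gq L K N X U M A / 2).
 { assert (Hn : forall n, (n < N)%nat ->
     rsum L (fun l => U l * (X l n - rsum K (fun k => M l k * Ab k n))^2)/2 + rsum K (fun k => cA k n * (Ab k n - A k n))
     <= rsum L (fun l => U l * (X l n - rsum K (fun k => M l k * A k n))^2)/2).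
   { intros n Hn. apply (LS L K U (fun l => X l n) (fun k => cA k n) (fun k => A k n) (fun k => Ab k n) M).
     - intros; left; auto.
     - intros; auto.
     - intros; auto.
     - intros; auto.
     - intros k Hk. apply HDA; auto.
     - intros k Hk. apply HAbe; auto. }
   assert (S1 := rsum_le N _ _ Hn). rewrite rsum_plus, 2!rsum_div2 in S1.
   unfold Gq. rewrite (rsum_swap L N), (rsum_swap L N).
   replace (lam * Lin) with (rsum N (fun n => rsum K (fun k => cA k n * (Ab k n - A k n)))). lra.
   unfold Lin. rewrite <- rsum_scal, rsum_swap. apply rsum_ext; intros n Hn'. rewrite <- rsum_scal.
   apply rsum_ext; intros. unfold cA. ring. }
 assert (SM : Gq L K N X U Mb Ab <= Gq L K N X U M Ab).
 { unfold Gq. apply rsum_le. intros l Hl.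
   assert (H := LS N K (fun _ => U l) (fun n => X l n) (fun _ => 0) (fun k => M l k) (fun k => Mb l k) (fun n k => Ab k n)).
   assert (E : forall (B : mat), rsum N (fun n => U l * (X l n - rsum K (fun k => Ab k n * B l k))^2)
      = rsum N (fun n => U l * (X l n - rsum K (fun k => B l k * Ab k n))^2)).
   { intros B. apply rsum_ext; intros n Hn. f_equal. f_equal. f_equal. apply rsum_ext; intros; ring. }
   rewrite 2!E in H. rewrite (rsum_ext K _ (fun _ => 0)) in H by (intros; ring). rewrite rsum_zero in H.
   cut (rsum N (fun n => U l * (X l n - rsum K (fun k => Mb l k * Ab k n))^2) / 2 + 0 <=
        rsum N (fun n => U l * (X l n - rsum K (fun k => M l k * Ab k n))^2) / 2). lra.
   apply H.
   - intros; left; auto.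
   - intros; auto.
   - intros; auto.
   - intros; lra.
   - intros k Hk. specialize (HdenM l k Hl Hk). rewrite mmUM in HdenM by auto. lra.
   - intros k Hk. unfold Mb, updM. rewrite mmUX, mmUM by auto. rewrite Rplus_0_r. reflexivity. }
 pose (Pen (B : mat) := rsum K (fun k => rsum N (fun n => Rpower (B k n + xi) (1 - h n)))).
 assert (SP : Pen Ab <= Pen A + Lin).
 { unfold Pen, Lin. rewrite <- rsum_plus. apply rsum_le; intros k Hk. rewrite <- rsum_plus. apply rsum_le; intros n Hn.
   specialize (Hh n Hn). specialize (HA k n Hk Hn). specialize (HAb k n Hk Hn).
   assert (T := pow_tangent (1 - h n) (A k n + xi) (Ab k n + xi) ltac:(lra) ltac:(lra) ltac:(lra)).
   replace (1 - h n - 1) with (- h n) in T by ring.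
   replace (Ab k n + xi - (A k n + xi)) with (Ab k n - A k n) in T by ring. exact T. }
 assert (PE : forall B : mat, norm1 K N (fun k n => Rpower (B k n + xi) (1 - Hmap h k n)) = Pen B).
 { intros B. unfold norm1, Pen, Hmap. apply rsum_ext; intros. apply rsum_ext; intros.
   apply Rabs_pos_eq. left; apply Rpower_pos. }
 assert (GE : forall M' A' : mat, Gq L K N X U M' A' / 2 = rsum L (fun l => U l * q M' A' l / 2)).
 { intros. unfold Gq, q. rewrite <- rsum_div2. apply rsum_ext; intros. rewrite rsum_scal. reflexivity. }
 assert (KEY : forall s u Q, 0 < s -> u = / 2 * / s -> 0 <= Q -> / 2 * sqrt Q <= s / 4 + u * Q / 2).
 { intros s u Q Hs Hu HQ. rewrite <- (pow2_sqrt Q) at 2 by auto. set (x := sqrt Q). subst u.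
   replace (s / 4 + / 2 * / s * x ^ 2 / 2) with (/ 2 * x + (x - s)^2 / (4 * s)) by (field; lra).
   assert (0 <= (x - s)^2 / (4 * s)). { unfold Rdiv. apply Rmult_le_pos. apply pow2_ge_0. left; apply Rinv_0_lt_compat; lra. }
   lra. }
 assert (O1 : objective L K N X lam xi h Mb Ab <= rsum L (fun l => s0 l / 4) + Gq L K N X U Mb Ab / 2 + lam * Pen Ab).
 { unfold objective. rewrite PE, GE. unfold norm21. rewrite <- rsum_scal.
   cut (rsum L (fun l => / 2 * rownorm N (msub X (matmul K Mb Ab)) l) <= rsum L (fun l => s0 l / 4) + rsum L (fun l => U l * q Mb Ab l / 2)). lra.
   rewrite <- rsum_plus. apply rsum_le; intros l Hl. apply KEY; auto. apply rsum_nonneg; intros; apply pow2_ge_0. }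
 assert (O2 : objective L K N X lam xi h M A = rsum L (fun l => s0 l / 4) + Gq L K N X U M A / 2 + lam * Pen A).
 { unfold objective. rewrite PE, GE. unfold norm21. rewrite <- rsum_scal.
   cut (rsum L (fun l => / 2 * rownorm N (msub X (matmul K M A)) l) = rsum L (fun l => s0 l / 4) + rsum L (fun l => U l * q M A l / 2)). lra.
   rewrite <- rsum_plus. apply rsum_ext; intros l Hl.
   change (rownorm N (msub X (matmul K M A)) l) with (sqrt (q M A l)).
   rewrite <- (Hsq l Hl). specialize (Hs0 l Hl). rewrite sqrt_pow2 by lra. rewrite HUe. field. lra. }
 assert (lam * Pen Ab <= lam * (Pen A + Lin)) by (apply Rmult_le_compat_l; auto).
 lra.
Qed.
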